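(* Let $Q$ be a set, $(F_i)_{i\in I}$ a family of real-valued maps on $Q$ and $(k_i)_{i\in I}$ a bounded family of nonnegative reals. Assume $\sum_{t\in S}|F_i(t)|\le k_i\mod c_0(I)$ for every finite $S\subseteq Q$, and that $\{i\in I:F_i(t)\ne0\}$ is countable for every $t\in Q$. Then the following are equivalent: (a) $(F_i)_{i\in I}$ is of type $c_0\ell_1$; (b) there exist disjoint sets $A,B$ with $I\times Q=A\cup B$ such that $\lim_{i\in I}F_i(t)\chi_A(i,t)=0$ for all $t\in Q$ and $B_i=\{t\in Q:(i,t)\in B\}$ is countable for all $i\in I$; (c) $(F_i)_{i\in I}$ is of type $c_0\ell_1$ bounded by $(k_i)_{i\in I}$.
   Context: $\lim_{i\in I}a_i=0$ means $\{i:|a_i|\ge\varepsilon\}$ is finite for every $\varepsilon>0$; $c_0(I)$ is the set of such families. ''$x_i\le y_i\mod c_0(I)$'' means $\{i:x_i\ge y_i+\varepsilon\}$ is finite for every $\varepsilon>0$. $\chi_A$ is the characteristic function of $A$. $(F_i)$ is of type $c_0\ell_1$ if $F_i(t)=a_{i,t}+b_{i,t}$ ($i\in I$, $t\in Q$) with $\lim_ia_{i,t}=0$ for each $t\in Q$ and $\sup_i\sum_{t\in Q}|b_{i,t}|<\infty$; it is of type $c_0\ell_1$ bounded by $(k_i)$ if additionally $\sum_{t\in Q}|b_{i,t}|\le k_i$ for each $i$. *)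

(* Defs.v *)
From Stdlib Require Import Reals List Classical ClassicalDescription.
Import ListNotations.
Open Scope R_scope.

Definition finite_pred {T : Type} (P : T -> Prop) : Prop :=
  exists l : list T, forall x, P x -> In x l.

Definition countable_pred {T : Type} (P : T -> Prop) : Prop :=
  exists g : T -> nat, forall x y, P x -> P y -> g x = g y -> x = y.

Definition lim0 {I : Type} (a : I -> R) : Prop :=
  forall eps, 0 < eps -> finite_pred (fun i => eps <= Rabs (a i)).

Definition le_mod_c0 {I : Type} (x y : I -> R) : Prop :=
  forall eps, 0 < eps -> finite_pred (fun i => y i + eps <= x i).

(* Sum of f over a finite set given as a duplicate-free list. *)
Definition lsum {T : Type} (f : T -> R) (S : list T) : R :=
  fold_right (fun t acc => f t + acc) 0 S.

(* sum_{t in Q} |f t| <= k  (unordered sum of nonnegative terms = sup of finite partial sums) *)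
Definition abs_sum_le {Q : Type} (f : Q -> R) (k : R) : Prop :=
  forall S : list Q, NoDup S -> lsum (fun t => Rabs (f t)) S <= k.

Definition chi {I Q : Type} (A : I -> Q -> Prop) (i : I) (t : Q) : R :=
  if excluded_middle_informative (A i t) then 1 else 0.

Definition type_c0l1 {I Q : Type} (F : I -> Q -> R) : Prop :=
  exists a b : I -> Q -> R,
    (forall i t, F i t = a i t + b i t) /\
    (forall t, lim0 (fun i => a i t)) /\
    (exists M : R, forall i, abs_sum_le (b i) M).

Definition type_c0l1_bounded {I Q : Type} (F : I -> Q -> R) (k : I -> R) : Prop :=
  exists a b : I -> Q -> R,
    (forall i t, F i t = a i t + b i t) /\
    (forall t, lim0 (fun i => a i t)) /\
    (forall i, abs_sum_le (b i) (k i)).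

(* Main.v *)
Require Import Defs.
From Stdlib Require Import Reals List Lra Lia Classical ClassicalEpsilon ClassicalDescription FunctionalExtensionality PropExtensionality Cantor.
Import ListNotations.
Open Scope R_scope.

Definition cov {T} (P : T -> Prop) :=
  exists f : nat -> option T, forall x, P x -> exists n, f n = Some x.

Lemma countable_cov {T} (P : T -> Prop) : countable_pred P -> cov P.
Proof.
  intros [g Hg].
  exists (fun n => match excluded_middle_informative (exists x, P x /\ g x = n) with
          | left H => Some (proj1_sig (constructive_indefinite_description _ H))
          | right _ => None end).
  intros x Px. exists (g x).
  destruct (excluded_middle_informative _) as [H|H].
  - destruct (constructive_indefinite_description _ H) as [y [Py Hy]]; simpl. f_equal. apply Hg; auto.
  - exfalso; apply H; eauto.
Qed.

Lemma cov_countable {T} (P : T -> Prop) : cov P -> countable_pred P.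
Proof.
  intros [f Hf].
  exists (fun x => match excluded_middle_informative (exists n, f n = Some x) with
     | left H => proj1_sig (constructive_indefinite_description _ H) | right _ => O end).
  intros x y Px Py.
  destruct (excluded_middle_informative (exists n, f n = Some x)) as [Hx|Hx]; [|exfalso; auto].
  destruct (excluded_middle_informative (exists n, f n = Some y)) as [Hy|Hy]; [|exfalso; auto].
  destruct (constructive_indefinite_description _ Hx) as [n Hn].
  destruct (constructive_indefinite_description _ Hy) as [m Hm]; simpl. intros ->. congruence.
Qed.

Lemma cov_mono {T} (P P' : T -> Prop) : (forall x, P x -> P' x) -> cov P' -> cov P.
Proof. intros H [f Hf]; exists f; auto. Qed.

Lemma cov_exact {T} (P : T -> Prop) : cov P -> exists f : nat -> option T, forall x, P x <-> exists n, f n = Some x.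
Proof.
  intros [f Hf].
  exists (fun n => match f n with Some x => if excluded_middle_informative (P x) then Some x else None | None => None end).
  intros x; split.
  - intros Px. destruct (Hf x Px) as [n Hn]. exists n. rewrite Hn.
    destruct (excluded_middle_informative (P x)); tauto.
  - intros [n Hn]. destruct (f n) as [y|]; [|discriminate].
    destruct (excluded_middle_informative (P y)); congruence.
Qed.

Lemma cov_choice {X T} (P : X -> T -> Prop) : (forall x, cov (P x)) ->
  exists G : X -> nat -> option T, forall x y, P x y -> exists n, G x n = Some y.
Proof.
  intros H.
  exists (fun x => epsilon (inhabits (fun _:nat => @None T)) (fun f => forall y, P x y -> exists n, f n = Some y)).
  intros x y Hxy.
  pose proof (epsilon_spec (inhabits (fun _:nat => @None T)) (fun f => forall y, P x y -> exists n, f n = Some y) (H x)) as Hs.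
  apply Hs, Hxy.
Qed.

Lemma cov_union {I T} (PI : I -> Prop) (P : I -> T -> Prop) :
  cov PI -> (forall i, cov (P i)) -> cov (fun y => exists i, PI i /\ P i y).
Proof.
  intros [h Hh] HP. destruct (cov_choice P HP) as [G HG].
  exists (fun m => match h (fst (of_nat m)) with Some i => G i (snd (of_nat m)) | None => None end).
  intros y [i [Hi Hy]]. destruct (Hh i Hi) as [n Hn]. destruct (HG i y Hy) as [k Hk].
  exists (to_nat (n, k)). rewrite cancel_of_to. simpl. rewrite Hn. exact Hk.
Qed.

Lemma cov_nat_union {T} (P : nat -> T -> Prop) :
  (forall n, cov (P n)) -> cov (fun y => exists n, P n y).
Proof.
  intros H. apply (cov_mono _ (fun y => exists n, True /\ P n y)).
  - intros y [n Hn]; eauto.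
  - apply cov_union; auto. exists (fun n => Some n). intros n _; eauto.
Qed.

Lemma lsum_app {T} (f : T -> R) l1 l2 : lsum f (l1 ++ l2) = lsum f l1 + lsum f l2.
Proof. induction l1; simpl; [lra|]. unfold lsum in *; simpl in *. rewrite IHl1. lra. Qed.

Lemma lsum_cons {T} (f : T -> R) x l : lsum f (x :: l) = f x + lsum f l.
Proof. reflexivity. Qed.

Lemma lsum_nonneg {T} (f : T -> R) l : (forall x, In x l -> 0 <= f x) -> 0 <= lsum f l.
Proof.
  induction l; intros H; [simpl; lra|]. rewrite lsum_cons.
  assert (0 <= f a) by (apply H; simpl; auto).
  assert (0 <= lsum f l) by (apply IHl; intros; apply H; simpl; auto). lra.
Qed.

Lemma lsum_inj_le {U V} (f : U -> R) (g : V -> R) (phi : U -> V) (L : list U) : forall (M : list V),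
  NoDup L -> NoDup M -> (forall v, In v M -> 0 <= g v) ->
  (forall u, In u L -> f u <= 0 \/ (In (phi u) M /\ f u <= g (phi u))) ->
  (forall u u', In u L -> In u' L -> 0 < f u -> 0 < f u' -> phi u = phi u' -> u = u') ->
  lsum f L <= lsum g M.
Proof.
  induction L as [|u L IH]; intros M HL HM Hg Hf Hinj.
  - simpl. apply lsum_nonneg; auto.
  - apply NoDup_cons_iff in HL as [HuL HL]. rewrite lsum_cons.
    destruct (Rle_or_lt (f u) 0) as [Hu|Hu].
    + assert (lsum f L <= lsum g M).
      { apply IH; auto. intros; apply Hf; simpl; auto.
        intros; apply Hinj; simpl; auto. }
      lra.
    + destruct (Hf u (or_introl eq_refl)) as [?|[Hin Hle]]; [lra|].
      destruct (in_split _ _ Hin) as [M1 [M2 HM12]]. subst M.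
      rewrite lsum_app, lsum_cons.
      assert (lsum f L <= lsum g (M1 ++ M2)).
      { apply IH; auto.
        - eapply NoDup_remove_1; eauto.
        - intros v Hv; apply Hg. apply in_app_or in Hv. apply in_or_app. simpl. tauto.
        - intros u' Hu'. destruct (Rle_or_lt (f u') 0) as [H0|H0]; [left; auto|right].
          destruct (Hf u' (or_intror Hu')) as [?|[Hin' Hle']]; [lra|]. split; auto.
          apply in_app_or in Hin'. destruct Hin' as [?|[Heq|?]]; try (apply in_or_app; tauto).
          exfalso. assert (u' = u) by (apply Hinj; simpl; auto). subst; auto.
        - intros; apply Hinj; simpl; auto. }
      rewrite lsum_app in H. lra.
Qed.

Lemma bounded_nodup_cover {T} (P : T -> Prop) (K : nat) :
  (forall l, NoDup l -> (forall x, In x l -> P x) -> (length l <= K)%nat) ->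
  exists l, forall x, P x -> In x l.
Proof.
  intros HK. apply NNPP; intros Hn.
  assert (forall n, exists l, NoDup l /\ (forall x, In x l -> P x) /\ length l = n) as Hall.
  { induction n as [|n [l [Hl1 [Hl2 Hl3]]]].
    - exists []; repeat split; simpl; auto using NoDup_nil; tauto.
    - assert (exists x, P x /\ ~ In x l) as [x [Px Hx]].
      { apply NNPP; intros H'. apply Hn. exists l. intros x Px.
        apply NNPP; intros Hx. apply H'; eauto. }
      exists (x :: l); repeat split.
      + constructor; auto.
      + intros y [<-|Hy]; auto.
      + simpl; auto. }
  destruct (Hall (S K)) as [l [H1 [H2 H3]]]. specialize (HK l H1 H2). lia.
Qed.

Lemma lsum_lb {T} (f : T -> R) d l : (forall x, In x l -> d <= f x) -> d * INR (length l) <= lsum f l.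
Proof.
  induction l; intros H; simpl length; [simpl; lra|]. rewrite lsum_cons, S_INR.
  assert (d <= f a) by (apply H; simpl; auto).
  assert (d * INR (length l) <= lsum f l) by (apply IHl; intros; apply H; simpl; auto). lra.
Qed.

Lemma small_inv (x : R) : 0 < x -> exists n, / INR (S n) <= x.
Proof.
  intros Hx. destruct (INR_unbounded (/ x)) as [n Hn]. exists n.
  rewrite S_INR. assert (0 < /x) by (apply Rinv_0_lt_compat; auto).
  rewrite <- (Rinv_inv x). apply Rlt_le, Rinv_lt_contravar; [|lra].
  apply Rmult_lt_0_compat; lra.
Qed.

Lemma l1_support_countable {Q} (b : Q -> R) M : abs_sum_le b M -> countable_pred (fun t => b t <> 0).
Proof.
  intros HM. apply cov_countable.
  apply (cov_mono _ (fun y => exists n, / INR (S n) <= Rabs (b y))).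
  - intros t Ht. apply small_inv. apply Rabs_pos_lt; auto.
  - apply cov_nat_union. intros n.
    assert (0 < INR (S n)) by (apply lt_0_INR; lia).
    destruct (INR_unbounded (M * INR (S n))) as [K HK].
    destruct (bounded_nodup_cover (fun y => / INR (S n) <= Rabs (b y)) K) as [l Hl].
    + intros l Hnd Hin. pose proof (lsum_lb (fun t => Rabs (b t)) _ l Hin) as H1.
      specialize (HM l Hnd).
      assert (INR (length l) <= M * INR (S n)).
      { apply (Rmult_le_reg_l (/ INR (S n))). apply Rinv_0_lt_compat; auto.
        rewrite <- Rmult_assoc, (Rmult_comm _ M), Rmult_assoc, Rinv_l; lra. }
      apply INR_le. lra.
    + exists (fun m => nth_error l m). intros x Hx. apply (In_nth_error l x); auto.
Qed.

Lemma a_to_b {I Q} (F : I -> Q -> R) : type_c0l1 F ->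
     exists A B : I -> Q -> Prop,
       (forall i t, A i t \/ B i t) /\
       (forall i t, ~ (A i t /\ B i t)) /\
       (forall t, lim0 (fun i => F i t * chi A i t)) /\
       (forall i, countable_pred (fun t => B i t)).
Proof.
  intros [a [b [HF [Ha [M HM]]]]].
  exists (fun i t => b i t = 0), (fun i t => b i t <> 0). repeat split.
  - intros i t. tauto.
  - intros i t [H1 H2]; auto.
  - intros t eps Heps. destruct (Ha t eps Heps) as [l Hl]. exists l. intros i Hi.
    apply Hl. unfold chi in Hi. destruct (excluded_middle_informative (b i t = 0)) as [H|H].
    + rewrite HF, H, Rplus_0_r, Rmult_1_r in Hi. exact Hi.
    + rewrite Rmult_0_r, Rabs_R0 in Hi. lra.
  - intros i. apply (l1_support_countable (b i) M), HM.
Qed.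

Lemma c_to_a {I Q} (F : I -> Q -> R) k : (exists K, forall i, k i <= K) ->
  type_c0l1_bounded F k -> type_c0l1 F.
Proof.
  intros [K HK] [a [b [H1 [H2 H3]]]]. exists a, b. repeat split; auto.
  exists K. intros i S HS. specialize (H3 i S HS). specialize (HK i). lra.
Qed.

Inductive reach {Q : Type} (E : Q -> Q -> Prop) (t : Q) : Q -> Prop :=
| r_refl : reach E t t
| r_step : forall s u, reach E t s -> E s u -> reach E t u.

Lemma reach_trans {Q} (E : Q -> Q -> Prop) t s u : reach E t s -> reach E s u -> reach E t u.
Proof. intros H1 H2. induction H2; auto. eapply r_step; eauto. Qed.

Lemma reach_sym {Q} (E : Q -> Q -> Prop) : (forall s u, E s u -> E u s) ->
  forall t s, reach E t s -> reach E s t.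
Proof.
  intros Hs t s H. induction H. constructor.
  apply (reach_trans _ _ s); auto. eapply r_step; [constructor|]. auto.
Qed.

Lemma reach_eq {Q} (E : Q -> Q -> Prop) : (forall s u, E s u -> E u s) ->
  forall t s, reach E t s -> reach E t = reach E s.
Proof.
  intros Hs t s H. apply functional_extensionality; intros u. apply propositional_extensionality.
  split; intros H'.
  - apply (reach_trans _ _ t); auto. apply reach_sym; auto.
  - apply (reach_trans _ _ s); auto.
Qed.

Fixpoint lev {Q} (G : Q -> nat -> option Q) (t : Q) (n : nat) : nat -> option Q :=
  match n with
  | O => fun _ => Some t
  | S n => fun m => match lev G t n (fst (of_nat m)) with Some s => G s (snd (of_nat m)) | None => None end
  end.

Lemma reach_cov {Q} (E : Q -> Q -> Prop) : (forall s, cov (E s)) -> forall t, cov (reach E t).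
Proof.
  intros HE t. destruct (cov_choice E HE) as [G HG].
  exists (fun m => lev G t (fst (of_nat m)) (snd (of_nat m))).
  assert (forall s, reach E t s -> exists n m, lev G t n m = Some s) as Hl.
  { intros s H. induction H as [|s u H [n [m IH]] Hsu].
    - exists O, O. reflexivity.
    - destruct (HG s u Hsu) as [k Hk]. exists (S n), (to_nat (m, k)).
      cbn [lev]. rewrite cancel_of_to. cbn [fst snd]. rewrite IH. exact Hk. }
  intros s H. destruct (Hl s H) as [n [m Hnm]]. exists (to_nat (n, m)).
  rewrite cancel_of_to. exact Hnm.
Qed.

Definition enum {Q} (P : Q -> Prop) : nat -> option Q :=
  epsilon (inhabits (fun _ : nat => @None Q)) (fun f => forall x, P x <-> exists n, f n = Some x).

Lemma enum_spec {Q} (P : Q -> Prop) : cov P -> forall x, P x <-> exists n, enum P n = Some x.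
Proof.
  intros H. apply (epsilon_spec (inhabits (fun _ : nat => @None Q)) (fun f => forall x, P x <-> exists n, f n = Some x)).
  apply cov_exact, H.
Qed.

Definition rank {Q} (P : Q -> Prop) (x : Q) : nat :=
  epsilon (inhabits O) (fun n => enum P n = Some x).

Lemma rank_spec {Q} (P : Q -> Prop) x : cov P -> P x -> enum P (rank P x) = Some x.
Proof.
  intros H Px. apply (epsilon_spec (inhabits O) (fun n => enum P n = Some x)).
  apply (enum_spec P H), Px.
Qed.

Lemma clamp_abs x m : 0 <= m -> Rabs (Rmax (- m) (Rmin x m)) = Rmin (Rabs x) m.
Proof.
  intros Hm. unfold Rmax, Rmin, Rabs.
  repeat (destruct (Rle_dec _ _) || destruct (Rcase_abs _)); lra.
Qed.

Lemma clamp_res x m : 0 <= m -> Rabs (x - Rmax (- m) (Rmin x m)) = Rmax 0 (Rabs x - m).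
Proof.
  intros Hm. unfold Rmax, Rmin, Rabs.
  repeat (destruct (Rle_dec _ _) || destruct (Rcase_abs _)); lra.
Qed.

Lemma greedy_sum (x : nat -> R) K : 0 <= K -> (forall n, 0 <= x n) -> forall N,
  lsum (fun n => Rmin (x n) (Rmax 0 (K - lsum x (seq 0 n)))) (seq 0 N) = Rmin K (lsum x (seq 0 N)).
Proof.
  intros HK Hx N. induction N.
  - simpl. unfold Rmin. destruct (Rle_dec _ _); lra.
  - rewrite seq_S, !lsum_app, IHN. simpl.
    assert (0 <= lsum x (seq 0 N)) by (apply lsum_nonneg; auto).
    specialize (Hx N).
    unfold Rmin, Rmax. repeat destruct (Rle_dec _ _); lra.
Qed.

Definition Bp {I Q} (B : I -> Q -> Prop) (F : I -> Q -> R) i t := B i t /\ F i t <> 0.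
Definition Erel {I Q} (B : I -> Q -> Prop) (F : I -> Q -> R) s u := exists i, Bp B F i s /\ Bp B F i u.
Definition Cmp {I Q} (B : I -> Q -> Prop) (F : I -> Q -> R) t := reach (Erel B F) t.
Definition en {I Q} (B : I -> Q -> Prop) (F : I -> Q -> R) t := enum (Cmp B F t).
Definition rk {I Q} (B : I -> Q -> Prop) (F : I -> Q -> R) t := rank (Cmp B F t) t.
Definition xf {I Q} (B : I -> Q -> Prop) (F : I -> Q -> R) i (f : nat -> option Q) n :=
  match f n with
  | Some s => if excluded_middle_informative (Bp B F i s /\ rk B F s = n) then Rabs (F i s) else 0
  | None => 0 end.
Definition Xs {I Q} (B : I -> Q -> Prop) (F : I -> Q -> R) i f n := lsum (xf B F i f) (seq 0 n).
Definition mm {I Q} (B : I -> Q -> Prop) (F : I -> Q -> R) (k : I -> R) i t :=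
  Rmax 0 (k i - Xs B F i (en B F t) (rk B F t)).
Definition bb {I Q} (B : I -> Q -> Prop) (F : I -> Q -> R) (k : I -> R) i t :=
  if excluded_middle_informative (Bp B F i t) then Rmax (- mm B F k i t) (Rmin (F i t) (mm B F k i t)) else 0.

Lemma xf_nonneg {I Q} (B : I -> Q -> Prop) F i f n : 0 <= xf B F i f n.
Proof.
  unfold xf. destruct (f n); [|lra]. destruct (excluded_middle_informative _); [apply Rabs_pos|lra].
Qed.

Lemma mm_nonneg {I Q} (B : I -> Q -> Prop) F k i t : 0 <= mm B F k i t.
Proof. unfold mm. apply Rmax_l. Qed.

Lemma b_to_c {I Q} (F : I -> Q -> R) (k : I -> R) (A B : I -> Q -> Prop)
  (hk0 : forall i, 0 <= k i)
  (hS : forall S : list Q, NoDup S ->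
          le_mod_c0 (fun i => lsum (fun t => Rabs (F i t)) S) k)
  (hcount : forall t : Q, countable_pred (fun i => F i t <> 0))
  (hAB : forall i t, A i t \/ B i t)
  (hA : forall t, lim0 (fun i => F i t * chi A i t))
  (hB : forall i, countable_pred (fun t => B i t)) :
  type_c0l1_bounded F k.
Proof.
  assert (Hcov : forall s, cov (Erel B F s)).
  { intros s. unfold Erel. apply cov_union.
    - apply (cov_mono _ (fun i => F i s <> 0)). { intros i [_ H]; exact H. }
      apply countable_cov, hcount.
    - intros i. apply (cov_mono _ (fun t => B i t)). { intros t [H _]; exact H. }
      apply countable_cov, hB. }
  assert (Hsym : forall s u, Erel B F s u -> Erel B F u s).
  { intros s u [i [H1 H2]]. exists i; auto. }
  assert (HC : forall t, cov (Cmp B F t)) by (intros t; apply reach_cov; auto).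
  assert (Hsame : forall i t0 t, Bp B F i t0 -> Bp B F i t -> Cmp B F t = Cmp B F t0).
  { intros i t0 t H0 H. symmetry. apply reach_eq; auto. eapply r_step; [constructor|]. exists i; auto. }
  assert (Hen : forall t, en B F t (rk B F t) = Some t).
  { intros t. apply rank_spec; auto. constructor. }
  exists (fun i t => F i t - bb B F k i t), (bb B F k).
  split; [intros; ring|]. split.
  -
    intros t eps Heps.
    set (eqd := fun x y : Q => excluded_middle_informative (x = y)).
    set (S0 := flat_map (fun n => match en B F t n with Some s => [s] | None => [] end) (seq 0 (S (rk B F t)))).
    set (St := nodup eqd S0).
    destruct (hS St (NoDup_nodup eqd S0) eps Heps) as [l1 Hl1].
    destruct (hA t eps Heps) as [l2 Hl2].
    exists (l1 ++ l2). intros i Hi. apply in_or_app.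
    unfold bb in Hi. destruct (excluded_middle_informative (Bp B F i t)) as [HBp|HBp].
    + left. apply Hl1. simpl.
      rewrite clamp_res in Hi by apply mm_nonneg.
      assert (Hm : eps <= Rabs (F i t) - mm B F k i t).
      { unfold Rmax at 1 in Hi. destruct (Rle_dec _ _); lra. }
      assert (Hk : k i + eps <= Xs B F i (en B F t) (S (rk B F t))).
      { unfold Xs. rewrite seq_S, lsum_app. simpl.
        unfold xf at 2. rewrite (Hen t).
        destruct (excluded_middle_informative _) as [_|Hn]; [|exfalso; tauto].
        unfold mm, Xs in Hm. pose proof (Rmax_r 0 (k i - lsum (xf B F i (en B F t)) (seq 0 (rk B F t)))). lra. }
      eapply Rle_trans; [exact Hk|]. unfold Xs.
      apply (lsum_inj_le _ _ (fun n => match en B F t n with Some s => s | None => t end)).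
      * apply seq_NoDup.
      * apply NoDup_nodup.
      * intros; apply Rabs_pos.
      * intros n Hn. unfold xf. destruct (en B F t n) as [s|] eqn:Es; [|left; lra].
        right. split.
        -- unfold St. apply nodup_In. unfold S0. apply in_flat_map. exists n. rewrite Es. simpl; auto.
        -- destruct (excluded_middle_informative _); [lra|apply Rabs_pos].
      * intros n n' _ _ H1 H2 Heq. unfold xf in H1, H2.
        destruct (en B F t n) as [s|]; [|lra]. destruct (en B F t n') as [s'|]; [|lra].
        destruct (excluded_middle_informative (Bp B F i s /\ rk B F s = n)) as [[_ E1]|]; [|lra].
        destruct (excluded_middle_informative (Bp B F i s' /\ rk B F s' = n')) as [[_ E2]|]; [|lra].
        subst. reflexivity.
    + right. apply Hl2. destruct (hAB i t) as [HAt|HBt].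
      * unfold chi. destruct (excluded_middle_informative (A i t)); [|tauto].
        rewrite Rmult_1_r. rewrite Rminus_0_r in Hi. exact Hi.
      * assert (F i t = 0) by (apply NNPP; intros H; apply HBp; split; auto).
        rewrite H, Rminus_0_r, Rabs_R0 in Hi. lra.
  -
    intros i St HSt.
    destruct (classic (exists t0, Bp B F i t0)) as [[t0 H0]|Hno].
    + set (f := en B F t0).
      set (y := fun n => Rmin (xf B F i f n) (Rmax 0 (k i - lsum (xf B F i f) (seq 0 n)))).
      set (N := S (fold_right (fun t m => Nat.max m (rk B F t)) O St)).
      assert (HN : forall t, In t St -> (rk B F t < N)%nat).
      { unfold N. clear. induction St as [|a St IH]; simpl; [tauto|].
        intros t [<-|Ht]; [lia|]. specialize (IH t Ht). lia. }
      assert (Hbt : forall t, Bp B F i t -> en B F t = f /\ Rabs (bb B F k i t) = y (rk B F t)).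
      { intros t Ht. assert (Ef : en B F t = f) by (unfold en, f; rewrite (Hsame i t0 t); auto).
        split; auto. unfold bb. destruct (excluded_middle_informative _); [|tauto].
        rewrite clamp_abs by apply mm_nonneg. unfold y. unfold xf at 1.
        rewrite <- Ef, Hen.
        destruct (excluded_middle_informative _) as [_|Hn]; [|exfalso; tauto].
        unfold mm, Xs. rewrite Ef. reflexivity. }
      assert (Hb0 : forall t, ~ Bp B F i t -> bb B F k i t = 0).
      { intros t Ht. unfold bb. destruct (excluded_middle_informative _); tauto. }
      apply Rle_trans with (lsum y (seq 0 N)).
      * apply (lsum_inj_le _ _ (rk B F)); auto using seq_NoDup.
        -- intros v _. unfold y. unfold Rmin. destruct (Rle_dec _ _); [apply xf_nonneg|apply Rmax_l].
        -- intros t Ht. destruct (classic (Bp B F i t)) as [HB|HB].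
           ++ right. split. apply in_seq. specialize (HN t Ht). lia.
              rewrite (proj2 (Hbt t HB)). lra.
           ++ left. rewrite Hb0 by auto. rewrite Rabs_R0. lra.
        -- intros t t' _ _ H1 H2 Heq.
           assert (HB1 : Bp B F i t) by (apply NNPP; intros HB; rewrite (Hb0 t HB), Rabs_R0 in H1; lra).
           assert (HB2 : Bp B F i t') by (apply NNPP; intros HB; rewrite (Hb0 t' HB), Rabs_R0 in H2; lra).
           pose proof (Hen t) as E1. pose proof (Hen t') as E2.
           rewrite (proj1 (Hbt t HB1)) in E1. rewrite (proj1 (Hbt t' HB2)) in E2.
           rewrite Heq in E1. congruence.
      * unfold y. rewrite greedy_sum; auto using xf_nonneg. apply Rmin_l.
    + apply Rle_trans with (lsum (fun _ : Q => 0) []); [|simpl; auto].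
      apply (lsum_inj_le _ _ (fun t => t)); auto using NoDup_nil.
      all: intros t; intros; unfold bb in *; destruct (excluded_middle_informative (Bp B F i t)) as [Hq|Hq];
        [exfalso; eauto| rewrite ?Rabs_R0 in *; try lra; left; lra].
Qed.

Theorem proposition2p22 (I Q : Type) (F : I -> Q -> R) (k : I -> R)
  (hk0 : forall i, 0 <= k i)
  (hkb : exists K : R, forall i, k i <= K)
  (hS : forall S : list Q, NoDup S ->
          le_mod_c0 (fun i => lsum (fun t => Rabs (F i t)) S) k)
  (hcount : forall t : Q, countable_pred (fun i => F i t <> 0)) :
  (type_c0l1 F <->
     exists A B : I -> Q -> Prop,
       (forall i t, A i t \/ B i t) /\
       (forall i t, ~ (A i t /\ B i t)) /\
       (forall t, lim0 (fun i => F i t * chi A i t)) /\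
       (forall i, countable_pred (fun t => B i t))) /\
  ((exists A B : I -> Q -> Prop,
       (forall i t, A i t \/ B i t) /\
       (forall i t, ~ (A i t /\ B i t)) /\
       (forall t, lim0 (fun i => F i t * chi A i t)) /\
       (forall i, countable_pred (fun t => B i t))) <->
     type_c0l1_bounded F k).
Proof.
  assert (Hbc : (exists A B : I -> Q -> Prop,
       (forall i t, A i t \/ B i t) /\
       (forall i t, ~ (A i t /\ B i t)) /\
       (forall t, lim0 (fun i => F i t * chi A i t)) /\
       (forall i, countable_pred (fun t => B i t))) -> type_c0l1_bounded F k).
  { intros [A [B [H1 [_ [H3 H4]]]]]. apply (b_to_c F k A B); auto. }
  split; split.
  - apply a_to_b.
  - intros H. apply (c_to_a F k hkb), Hbc, H.
  - exact Hbc.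
  - intros H. apply a_to_b, (c_to_a F k hkb), H.
Qed.
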